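(* Consider the DOMT construction described in the context. Let $t_0$ be the time of the last rejection, and suppose a ''mini-drought'' of length $k$ occurs, i.e. no hypotheses are rejected for $t\in(t_0,t_0+k]$. Assume the base procedure's threshold during the drought is governed by a monotonically decreasing sequence $\gamma_k=\Theta\!\big(\tfrac{1}{k\log^2k}\big)$ indexed by the time elapsed since the last discovery, so that at $t=t_0+k$, $\lambda_t^{\mathrm{base}}=\Theta(\gamma_k)$. Then, at $t=t_0+k$, $$\frac{\mathbb{E}[\lambda_t^{\mathrm{DOMT}}]}{\lambda_t^{\mathrm{base}}}=1+\Omega\!\left(\frac{k\log^2k}{\sqrt{t_0+k}}\right),$$ and if the drought is macroscopic, $k=\Theta(t)$, this relative advantage diverges at rate $\Omega(\sqrt t\,\log^2t)$.
   Context: A base online testing procedure produces thresholds $\lambda_t^{\mathrm{base}}\in[0,1]$ from its own (virtual) history. DOMT with exploration coefficient $\kappa>0$ and level $\alpha\in(0,1)$: let $Z_t$ be i.i.d. $\mathrm{Uniform}[0,1]$ independent of everything else, $\xi_t=\frac{\kappa\alpha}{\sqrt t}Z_t$ (so $\xi_t\sim\mathrm{Uniform}[0,\kappa\alpha/\sqrt t]$), and the DOMT threshold is $\lambda_t^{\mathrm{DOMT}}=\lambda_t^{\mathrm{base}}+\xi_t$ (clipped at $1$), where the base procedure's state is updated only using its own unperturbed decisions $\mathbf{1}\{p_t\le\lambda_t^{\mathrm{base}}\}$. *)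

(* Defs.v *)
From mathcomp Require Import all_boot all_order all_algebra.
From mathcomp Require Import all_classical all_reals all_analysis.
Set Implicit Arguments. Unset Strict Implicit. Unset Printing Implicit Defensive.
Import Order.TTheory GRing.Theory Num.Theory.
Local Open Scope ring_scope.

Definition UnifZ (R : realType) := uniform_prob (@ltr01 R).

Definition xi (R : realType) (kappa alpha : R) (t : nat) (z : R) : R :=
  kappa * alpha / Num.sqrt (t%:R) * z.

Definition lambda_DOMT (R : realType) (kappa alpha : R) (t : nat)
    (lam_base : R) (z : R) : R :=
  Num.min (lam_base + xi kappa alpha t z) 1.

(* E[lambda_t^DOMT] (expectation over Z, the base threshold being given). *)
Definition E_lambda_DOMT (R : realType) (kappa alpha : R) (t : nat)
    (lam_base : R) : R :=
  fine ('E_(@UnifZ R)[lambda_DOMT kappa alpha t lam_base])%E.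

(* Main.v *)
Require Import Defs.
From mathcomp Require Import all_boot all_order all_algebra.
From mathcomp Require Import all_classical all_reals all_analysis.
From mathcomp Require Import measurable_realfun ring lra.
Import Order.TTheory GRing.Theory Num.Theory.
Local Open Scope ring_scope.
Section S.
Context (R : realType).
Local Open Scope classical_set_scope.

Lemma P_seg : @UnifZ R `[2^-1, 1] = (2^-1)%:E.
Proof.
rewrite /UnifZ /= /uniform_prob.
rewrite (eq_integral (fun=> 1%:E)); last first.
  move=> x; rewrite inE /= in_itv /= /uniform_pdf => /andP[hx1 hx2].
  rewrite hx2 andbT (le_trans _ hx1) ?invr_ge0 ?ler0n // subr0 invr1 //.
rewrite integral_cst //= mul1e lebesgue_measure_itv /= lte_fin.
rewrite invf_lt1 ?ltr1n // -EFinD; congr (_%:E); rewrite {1}(splitr 1) div1r addrK //.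
Qed.
Lemma Ic (lam : R) : (\int[@UnifZ R]_z lam%:E = lam%:E)%E.
Proof. rewrite -[LHS]/(\int[@UnifZ R]_z (cst lam%:E z))%E integral_cst //.
 have P1 : (@UnifZ R) setT = 1%:E by exact: probability_setT.
 by rewrite [X in (_ * X)%E](_ : _ = 1%:E) ?mule1.
Qed.

Lemma E_lower (lam c : R) : 0 < c -> 0 <= lam -> lam <= 2^-1 ->
 ((lam + Num.min c (2^-1) / 4)%:E <= \int[@UnifZ R]_z (Num.min (lam + c*z) 1)%:E)%E
 /\ (\int[@UnifZ R]_z (Num.min (lam + c*z) 1)%:E <= 1)%E.
Proof.
move=> c0 l0 l2.
set P := @UnifZ R.
pose cl (z : R) := Num.min (Num.max z 0) 1.
pose h z := Num.min (lam + c * cl z) 1.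
have mcl : measurable_fun setT cl.
  rewrite /cl; apply: measurable_minr => //.
  exact: measurable_maxr.
have mh : measurable_fun setT h.
  rewrite /h; apply: measurable_minr => //.
  apply: measurable_funD => //; exact: measurable_funM.
have mf : measurable_fun setT (fun z : R => Num.min (lam + c * z) 1).
  apply: measurable_minr => //.
  apply: measurable_funD => //; exact: measurable_funM.
have -> : (\int[P]_z (Num.min (lam + c*z) 1)%:E = \int[P]_z (h z)%:E)%E.
  apply: ae_eq_integral => //; try exact/measurable_EFinP.
  exists (~` `[0, 1]); split.
  - by apply: measurableC; exact: measurable_itv.
  - by rewrite /P /UnifZ /= /uniform_prob integral_uniform_pdf setICl integral_set0.
  - move=> x /= Hn Hx; apply: Hn => _.
    move: Hx; rewrite in_itv /= => /andP[x0 x1].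
    by rewrite /h /cl (max_l x0) (min_l x1).
have h1 z : h z <= 1 by rewrite /h ge_min lexx orbT.
have cl0 z : 0 <= cl z by rewrite /cl le_min ler01 andbT le_max lexx orbT.
have cl1 z : cl z <= 1 by rewrite /cl ge_min lexx orbT.
have hl z : lam <= h z.
  rewrite /h le_min; apply/andP; split; last by lra.
  by rewrite lerDl mulr_ge0 // ltW.
have h0 z : 0 <= h z by rewrite (le_trans l0).
split; last first.
  apply: (@le_trans _ _ (\int[P]_z (cst 1%:E z))%E).
    apply: ge0_le_integral => //.
    - by move=> z _; rewrite lee_fin.
    - exact/measurable_EFinP.
    - by move=> z _; rewrite lee_fin.
  by rewrite integral_cst //= probability_setT mule1.
set b := Num.min c 2^-1.
have b0 : 0 <= b by rewrite /b le_min ltW //= invr_ge0 ler0n.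
pose A : set R := `[2^-1, 1].
have mA : measurable A by exact: measurable_itv.
apply: (@le_trans _ _ (\int[P]_z ((lam)%:E + (b / 2)%:E * (\1_A z)%:E))%E).
rewrite ge0_integralD //; last 2 first.
  - by move=> z _; rewrite mule_ge0 // lee_fin ?divr_ge0.
  - apply: measurable_funeM; apply: measurableT_comp => //; exact: measurable_indic.
  rewrite Ic.
  rewrite ge0_integralZl //; first last.
  - by rewrite lee_fin divr_ge0.
  - apply: measurableT_comp => //; exact: measurable_indic.
  rewrite integral_indic //= setIT [X in (_ * X)%E](_ : _ = (2^-1)%:E); last exact: P_seg.
  rewrite -EFinM -EFinD lee_fin.
  lra.
apply: ge0_le_integral => //.
- by move=> z _; rewrite adde_ge0 // ?mule_ge0 // lee_fin ?divr_ge0.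
- apply: emeasurable_funD => //; apply: measurable_funeM; apply: measurableT_comp => //; exact: measurable_indic.
- exact/measurable_EFinP.
move=> z _; rewrite -EFinM -EFinD lee_fin indicE.
have bc : b <= c by rewrite /b ge_min lexx.
have b2 : b <= 2^-1 by rewrite /b ge_min lexx orbT.
case: (boolP (z \in A)) => zA; last by rewrite mulr0 addr0.
have : 2^-1 <= cl z.
  move: zA; rewrite inE /A /= in_itv /= => /andP[z1 z2].
  rewrite /cl max_l ?min_l //; apply: le_trans z1; lra.
move=> hz; rewrite mulr1 /h le_min; apply/andP; split; last by lra.
rewrite lerD2l; nra.
Qed.

Lemma E_ratio (kappa alpha lam : R) (t : nat) : 0 < kappa -> 0 < alpha ->
  (1 <= t)%N -> 0 < lam -> lam <= 2^-1 ->
  lam + Num.min (kappa * alpha) 2^-1 / (4 * Num.sqrt t%:R)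
    <= E_lambda_DOMT kappa alpha t lam.
Proof.
move=> k0 a0 t1 l0 l2.
have st1 : 1 <= Num.sqrt (t%:R : R).
  by rewrite -[X in X <= _](@sqrtr1 R) ler_sqrt ?ler1n ?ler0n.
have st0 : 0 < Num.sqrt (t%:R : R) by apply: lt_le_trans st1.
have c0 : 0 < kappa * alpha / Num.sqrt t%:R by rewrite divr_gt0 ?mulr_gt0.
have [lo up] := E_lower _ _ c0 (ltW l0) l2.
rewrite /E_lambda_DOMT /lambda_DOMT /xi expectation.unlock.
apply: (@le_trans _ _ (lam + Num.min (kappa * alpha / Num.sqrt t%:R) 2^-1 / 4)).
  set sq := Num.sqrt _.
  set m := Num.min _ _.
  have m0 : 0 <= m by rewrite le_min mulr_ge0 ?ltW //= invr_ge0 ler0n.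
  have m1 : m <= kappa * alpha by rewrite ge_min lexx.
  have m2 : m <= 2^-1 by rewrite ge_min lexx orbT.
  have -> : m / (4 * sq) = (m / sq) / 4 by field; rewrite ?(gt_eqF st0).
  rewrite lerD2l ler_pM2r ?invr_gt0 ?ltr0n // le_min; apply/andP; split.
    by rewrite ler_pM2r ?invr_gt0.
  rewrite ler_pdivrMr //; apply: (le_trans m2).
  rewrite -[X in X <= _]mulr1 ler_wpM2l ?invr_ge0 ?ler0n //; exact: st1.
case: (\int[_]_x _)%E lo up => [r| |] //= lo up.
Qed.
End S.

Theorem lemma1 (R : realType) (kappa alpha : R)
  (gamma : nat -> R) (lam_base : nat -> nat -> R)
  (c1 c2 d1 d2 : R) :
  0 < kappa -> 0 < alpha < 1 ->
  (* gamma is monotonically decreasing *)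
  (forall m n : nat, (m <= n)%N -> gamma n <= gamma m) ->
  (* gamma_k = Theta(1/(k log^2 k)) *)
  0 < c1 -> 0 < c2 ->
  (forall k : nat, (2 <= k)%N ->
     c1 / (k%:R * ln (k%:R) ^+ 2) <= gamma k <= c2 / (k%:R * ln (k%:R) ^+ 2)) ->
  (* base thresholds lie in [0,1] *)
  (forall t0 k : nat, 0 <= lam_base t0 k <= 1) ->
  (* lambda_t^base = Theta(gamma_k) at t = t0 + k *)
  0 < d1 -> 0 < d2 ->
  (forall t0 k : nat, (2 <= k)%N ->
     d1 * gamma k <= lam_base t0 k <= d2 * gamma k) ->
  (* ratio = 1 + Omega(k log^2 k / sqrt(t0 + k)) *)
  (exists C : R, 0 < C /\ exists K : nat, forall t0 k : nat, (K <= k)%N ->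
     1 + C * (k%:R * ln (k%:R) ^+ 2 / Num.sqrt ((t0 + k)%:R))
       <= E_lambda_DOMT kappa alpha (t0 + k) (lam_base t0 k) / lam_base t0 k)
  /\
  (* macroscopic drought k = Theta(t): relative advantage Omega(sqrt t log^2 t) *)
  (forall theta : R, 0 < theta ->
     exists C : R, 0 < C /\ exists T : nat, forall t0 k : nat,
       (T <= t0 + k)%N -> theta * (t0 + k)%:R <= k%:R ->
       1 + C * (Num.sqrt ((t0 + k)%:R) * ln ((t0 + k)%:R) ^+ 2)
         <= E_lambda_DOMT kappa alpha (t0 + k) (lam_base t0 k) / lam_base t0 k).
Proof.
move=> k0 /andP[a0 a1] gdec c10 c20 gb lb d10 d20 lamb.
set D := d2 * c2.
have D0 : 0 < D by rewrite mulr_gt0.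
set m := Num.min (kappa * alpha) 2^-1.
have m0 : 0 < m by rewrite lt_min mulr_gt0 //= invr_gt0 ltr0n.
have ln2 : 0 < ln (2 : R) by rewrite ln_gt0 // ltr1n.
pose K := maxn 2 (Num.Def.archi_bound (2 * D / ln (2 : R) ^+ 2)).
pose C := m / (4 * D).
have C0 : 0 < C by rewrite divr_gt0 // mulr_gt0.
have main : forall t0 k : nat, (K <= k)%N ->
   1 + C * (k%:R * ln (k%:R) ^+ 2 / Num.sqrt ((t0 + k)%:R))
       <= E_lambda_DOMT kappa alpha (t0 + k) (lam_base t0 k) / lam_base t0 k.
  move=> t0 k Kk.
  have k2 : (2 <= k)%N by apply: leq_trans Kk; rewrite leq_maxl.
  have kb : (Num.Def.archi_bound (2 * D / ln (2 : R) ^+ 2) <= k)%N.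
    by apply: leq_trans Kk; rewrite leq_maxr.
  have kpos : (0 : R) < k%:R by rewrite ltr0n; apply: leq_trans k2.
  have lnk : ln (2 : R) <= ln (k%:R : R).
    by rewrite ler_ln ?posrE // (ler_nat R 2 k).
  set G := k%:R * ln (k%:R : R) ^+ 2.
  have G0 : 0 < G by rewrite mulr_gt0 // exprn_gt0 // (lt_le_trans ln2).
  have GD : 2 * D <= G.
    have hb := @archi_boundP R (2 * D / ln (2 : R) ^+ 2) (ltW _).
    have hb' : 2 * D / ln (2 : R) ^+ 2 <= k%:R.
      apply/ltW/(lt_le_trans (hb _)); first by rewrite divr_gt0 ?mulr_gt0 ?exprn_gt0.
      by rewrite ler_nat.
    have -> : 2 * D = (2 * D / ln (2 : R) ^+ 2) * ln (2 : R) ^+ 2.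
      by field; rewrite ?(gt_eqF ln2).
    rewrite /G; apply: ler_pM => //.
    - by rewrite divr_ge0 ?exprn_ge0 ?ltW ?mulr_gt0.
    - by rewrite exprn_ge0 ?ltW.
    - nra.
  have lamU : lam_base t0 k <= D / G.
    have [_ h2] := andP (lamb t0 k k2).
    have [_ h3] := andP (gb k k2).
    apply: (le_trans h2); rewrite /D -mulrA; apply: ler_wpM2l; [exact: ltW | exact: h3].
  have lamL : 0 < lam_base t0 k.
    have [h1 _] := andP (lamb t0 k k2).
    have [h3 _] := andP (gb k k2).
    apply: lt_le_trans h1; rewrite mulr_gt0 // (lt_le_trans _ h3) // divr_gt0 //.
  have lam2 : lam_base t0 k <= 2^-1.
    apply: (le_trans lamU); rewrite ler_pdivrMr //.
    have : 2^-1 * G >= D by lra.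
    done.
  have t1 : (1 <= t0 + k)%N by apply: leq_trans (leq_addl _ _); apply: leq_trans k2.
  have hE := E_ratio _ _ _ _ _ k0 a0 t1 lamL lam2.
  rewrite ler_pdivlMr //; apply: le_trans hE.
  set lam := lam_base t0 k.
  set sq := Num.sqrt _.
  have sq0 : 0 < sq by rewrite sqrtr_gt0 ltr0n; apply: leq_trans t1.
  have GL : G * lam <= D.
    by rewrite -ler_pdivlMl // mulrC.
  rewrite -subr_ge0.
  have -> : lam + m / (4 * sq) - (1 + C * (G / sq)) * lam
            = m / (4 * sq) * ((D - G * lam) / D).
    by rewrite /C; field; rewrite ?(gt_eqF sq0) ?(gt_eqF D0).
  apply: mulr_ge0; apply: divr_ge0; rewrite ?subr_ge0 //; try exact: ltW.
  by rewrite mulr_ge0 ?ltW.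
split; first by exists C; split => //; exists K.
move=> th th0.
exists (C * th / 4); split; first by apply: divr_gt0; [exact: mulr_gt0|].
pose T := maxn (maxn 1 (Num.Def.archi_bound (K%:R / th)))
               (Num.Def.archi_bound (th^-2)).
exists T => t0 k hT hk.
have t1 : (1 <= t0 + k)%N.
  by apply: leq_trans hT; rewrite /T !leq_max leqnn.
have tpos : (0 : R) < (t0 + k)%:R by rewrite ltr0n.
have hKb : K%:R / th <= (t0 + k)%:R.
  apply/ltW/(lt_le_trans (archi_boundP _)); first by rewrite divr_ge0 ?ler0n ?ltW.
  rewrite ler_nat; apply: leq_trans hT.
  by rewrite /T !leq_max leqnn !orbT.
have Kk : (K <= k)%N.
  rewrite -(ler_nat R); apply: le_trans hk.
  by rewrite mulrC -ler_pdivrMr.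
have tth : th^-2 <= (t0 + k)%:R.
  apply/ltW/(lt_le_trans (archi_boundP _)); first by rewrite invr_ge0 exprn_ge0 ?ltW.
  by rewrite ler_nat; apply: leq_trans hT; rewrite /T !leq_max leqnn !orbT.
apply: le_trans (main t0 k Kk).
rewrite lerD2l.
set s := Num.sqrt _.
set t := ((t0 + k)%:R : R) in tpos hKb hk tth s *.
set Lt := ln t.
set Lk := ln (k%:R : R).
have kpos : (0 : R) < k%:R by apply: lt_le_trans hk; rewrite mulr_gt0.
have Lt0 : 0 <= Lt by rewrite /Lt ln_ge0 // /t ler1n.
have hLk : Lt / 2 <= Lk.
  have h1 : ln (th * t) <= Lk by rewrite /Lk ler_ln ?posrE ?mulr_gt0.
  have h2 : ln (th * t) = ln th + Lt by rewrite lnM ?posrE.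
  have h3 : ln (th^-2) <= Lt by rewrite /Lt ler_ln ?posrE ?invr_gt0 ?exprn_gt0.
  have h4 : ln (th^-2) = - (ln th + ln th).
    by rewrite lnV ?posrE ?exprn_gt0 // lnXn // mulr2n.
  lra.
have hL : Lt ^+ 2 / 4 <= Lk ^+ 2 by nra.
have s0 : 0 < s by rewrite sqrtr_gt0.
have ss : s * s = t by rewrite -expr2 sqr_sqrtr // ltW.
have -> : C * th / 4 * (s * Lt ^+ 2) = C * (th * s * Lt ^+ 2 / 4) by field.
apply: ler_wpM2l; first exact: ltW.
rewrite ler_pdivlMr //.
have -> : th * s * Lt ^+ 2 / 4 * s = (th * t) * (Lt ^+ 2 / 4) by rewrite -ss; field.
apply: ler_pM => //.
- by rewrite mulr_ge0 ?ltW.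
- by rewrite divr_ge0 ?exprn_ge0.
Qed.
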